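(* Let $G=D_6=\langle a,b\mid a^3=b^2=1,\ ba=a^2b\rangle$ be the dihedral group of order $6$. Then the class semigroup $\mathcal C(\mathcal B(G),\mathcal F(G))$ has exactly $26$ elements and is not a Clifford semigroup (for instance, the class $[b]$ of the one-term sequence $b$ does not lie in any subgroup of the class semigroup).
   Context: For a finite group $G$ (multiplicative, identity $1_G$), $\mathcal F(G)$ is the free abelian monoid with basis $G$ (sequences $S=g_1\boldsymbol{\cdot}\ldots\boldsymbol{\cdot}g_\ell$, operation $\boldsymbol{\cdot}$ = concatenation). $\pi(S)=\{g_{\tau(1)}\cdots g_{\tau(\ell)}:\tau\text{ a permutation of }[1,\ell]\}$, $\pi$ of the empty sequence is $\{1_G\}$, and $\mathcal B(G)=\{S\in\mathcal F(G):1_G\in\pi(S)\}$. For $S,S'\in\mathcal F(G)$, $S\sim S'$ means: for all $T\in\mathcal F(G)$, $S\boldsymbol{\cdot}T\in\mathcal B(G)\iff S'\boldsymbol{\cdot}T\in\mathcal B(G)$; this is a congruence, $[S]$ denotes the class of $S$, and the class semigroup $\mathcal C(\mathcal B(G),\mathcal F(G))$ is the set of classes with operation $[S]+[T]=[S\boldsymbol{\cdot}T]$. A commutative semigroup is a Clifford semigroup if every element lies in some subgroup of it. *)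

(* Defs.v *)
From mathcomp Require Import all_boot all_fingroup.
Set Implicit Arguments. Unset Strict Implicit. Unset Printing Implicit Defensive.

(* Sequences over a finite group gT: elements of the free abelian monoid F(G)
   are represented by lists [seq gT]; two lists represent the same element of
   F(G) iff they are perm_eq, and concatenation [++] is the monoid operation. *)

Definition inB (gT : finGroupType) (S : seq gT) : Prop :=
  exists S' : seq gT, perm_eq S S' /\ (\prod_(x <- S') x)%g = 1%g.

Definition seq_equiv (gT : finGroupType) (S S' : seq gT) : Prop :=
  forall T : seq gT, inB (S ++ T) <-> inB (S' ++ T).

Definition class_semigroup_card (gT : finGroupType) (n : nat) : Prop :=
  exists reps : seq (seq gT),
    size reps = n /\
    (forall i j, i < n -> j < n ->
        seq_equiv (nth [::] reps i) (nth [::] reps j) -> i = j) /\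
    (forall S : seq gT, exists2 R, R \in reps & seq_equiv S R).

(* A subgroup of the class semigroup, given as a ~-saturated set H of sequences
   (i.e. the union of the classes it contains): closed under the operation,
   containing an identity class [E], and with inverses in H. *)
Definition class_subgroup (gT : finGroupType) (H : seq gT -> Prop) : Prop :=
  (forall S S', seq_equiv S S' -> H S -> H S') /\
  (forall S T, H S -> H T -> H (S ++ T)) /\
  exists E, H E /\
    (forall S, H S -> seq_equiv (E ++ S) S) /\
    (forall S, H S -> exists T, H T /\ seq_equiv (S ++ T) E).

Definition in_some_subgroup (gT : finGroupType) (S : seq gT) : Prop :=
  exists H : seq gT -> Prop, class_subgroup H /\ H S.

Definition class_semigroup_clifford (gT : finGroupType) : Prop :=
  forall S : seq gT, in_some_subgroup S.

(* Main.v *)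
Require Import Defs.
From mathcomp Require Import all_boot all_algebra all_fingroup.
From mathcomp Require Import ring zify.
Import GRing.Theory.

Lemma oddE n : odd n = (n %% 2 == 1)%N. Proof. by rewrite modn2; case: (odd n). Qed.

Definition K := ('Z_3 * bool)%type.
Definition idK : K := (0%R, false).
Definition A1 : K := (1%R, false).
Definition A2 : K := ((2%:R)%R, false).
Definition B0 : K := (0%R, true).
Definition B1 : K := (1%R, true).
Definition B2 : K := ((2%:R)%R, true).
Definition mulK (x y : K) : K := ((x.1 + (if x.2 then - y.1 else y.1))%R, x.2 (+) y.2).
Definition kprod (L : seq K) := foldr mulK idK L.

Lemma K_cases (x : K) : x = idK \/ x = A1 \/ x = A2 \/ x = B0 \/ x = B1 \/ x = B2.
Proof.
case: x => [[[|[|[|i]]] Hi] []] //;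
 (repeat first [left; congr pair; apply: val_inj; done | right]); congr pair; by apply: val_inj.
Qed.

Ltac caseK x := case: (K_cases x) => [->|[->|[->|[->|[->|->]]]]].

Lemma mul1K x : mulK idK x = x.
Proof. by case: x => x s; rewrite /mulK /= add0r. Qed.

Lemma mulKA x y z : mulK x (mulK y z) = mulK (mulK x y) z.
Proof. case: x y z => [x1 [] ] [y1 []] [z1 []]; rewrite /mulK /=; congr (_,_); ring. Qed.

Lemma kprod_cat L1 L2 : kprod (L1 ++ L2) = mulK (kprod L1) (kprod L2).
Proof. elim: L1 => [|x L1 IH] /=; first by rewrite mul1K. by rewrite IH mulKA. Qed.

Lemma kprod_par L : (kprod L).2 = odd (count (fun x : K => x.2) L).
Proof. elim: L => [|x L IH] //=. by rewrite IH oddD oddb. Qed.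

Definition cm (x : K) (L : seq K) := count_mem x L.
Arguments cm : simpl never.

Lemma count6 (p : pred K) L : count p L =
  (p idK * cm idK L + p A1 * cm A1 L + p A2 * cm A2 L +
   p B0 * cm B0 L + p B1 * cm B1 L + p B2 * cm B2 L)%N.
Proof.
rewrite /cm; elim: L => [|x L IH] /=; first by rewrite !muln0.
by caseK x; rewrite IH /=; ring.
Qed.

Lemma natZ3 n : (((n%:R : 'Z_3) == 0)%R) = (n %% 3 == 0)%N.
Proof.
rewrite Zp_nat; apply/eqP/eqP => [/(congr1 val) //|h]; by apply: val_inj.
Qed.

Lemma kprod_norefl L : all (fun x : K => ~~ x.2) L ->
  (kprod L).1 = (((cm A1 L + 2 * cm A2 L)%N)%:R : 'Z_3)%R.
Proof.
rewrite /cm; elim: L => [|x L IH] //= /andP [hx /IH {}IH].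
move: hx; caseK x => //= _; rewrite IH /=; rewrite ?natrD ?natrM /=; ring.
Qed.

Definition cj (t : 'Z_3) (x : K) : K := ((x.1 + (if x.2 then t else 0))%R, x.2).

Lemma cj_mul t x y : cj t (mulK x y) = mulK (cj t x) (cj t y).
Proof. case: x y => [x1 [] ] [y1 []]; rewrite /mulK /cj /=; congr (_,_); ring. Qed.

Lemma kprod_cj t L : kprod (map (cj t) L) = cj t (kprod L).
Proof.
elim: L => [|x L IH] /=; first by rewrite /cj /= addr0.
by rewrite IH cj_mul.
Qed.

Lemma single L : (count (fun x : K => x.1 != 0%R) L <= 1)%N ->
  ((kprod L).1 == 0%R) = (count (fun x : K => x.1 != 0%R) L == 0%N).
Proof.
elim: L => [|x L IH] //=.
case: (eqVneq x.1 0%R) => hx /=.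
  rewrite add0n => h; rewrite -IH // hx add0r.
  by case: (x.2); rewrite ?oppr_eq0.
rewrite add1n => h.
have c0 : count (fun x : K => x.1 != 0%R) L = 0%N by move: h; rewrite ltnS leqn0 => /eqP.
have := IH (ltnW h); rewrite c0 eqxx => /eqP ->.
by rewrite oppr0 if_same addr0 (negbTE hx).
Qed.

Lemma key t L : kprod L = idK -> count (fun x => (cj t x).1 != 0%R) L != 1%N.
Proof.
move=> h; apply/negP => /eqP h1.
have := single (map (cj t) L); rewrite count_map h1 kprod_cj h /= => /(_ isT).
by rewrite /cj /= addr0 eqxx.
Qed.

Definition Fc (n1 n2 f0 f1 f2 : nat) : bool :=
  let r := (f0 + f1 + f2)%N in let m := (n1 + n2)%N in
  if r == 0%N then ((n1 + 2 * n2) %% 3 == 0)%N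
  else if odd r then false
  else if (2 <= m)%N then true
  else let nt := ((0 < f0) + (0 < f1) + (0 < f2))%N in
    if m == 1%N then (2 <= nt)%N
    else ~~ ((nt == 2%N) && [|| f0 == 1%N, f1 == 1%N | f2 == 1%N]).

Definition FL (L : seq K) := Fc (cm A1 L) (cm A2 L) (cm B0 L) (cm B1 L) (cm B2 L).

Lemma onlyif L : kprod L = idK -> FL L.
Proof.
move=> h.
have hp := kprod_par L; rewrite h count6 /= in hp.
have hk0 := key 0%R L h; have hk1 := key 1%R L h; have hk2 := key (2%:R)%R L h.
rewrite count6 /= in hk0; rewrite count6 /= in hk1; rewrite count6 /= in hk2.
rewrite /FL /Fc.
case: ifP => hr.
  have : ~~ has (fun x : K => x.2) L.
  by rewrite has_count count6 /=; lia.
  rewrite -all_predC => /kprod_norefl; rewrite h /= => /esym/eqP.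
  by rewrite natZ3.
rewrite oddE in hp *.
case: ifP => ho; first by lia.
case: ifP => // hm.
case: ifP => hm1; lia.
Qed.

Lemma cm_cons y x s : cm y (x :: s) = ((x == y) + cm y s)%N.
Proof. by []. Qed.
Lemma cm_nil y : cm y [::] = 0%N.
Proof. by []. Qed.
Lemma cm_cat y s t : cm y (s ++ t) = (cm y s + cm y t)%N.
Proof. by rewrite /cm count_cat. Qed.

Definition canon (g : K -> nat) : seq K := nseq (g idK) idK ++ nseq (g A1) A1 ++
  nseq (g A2) A2 ++ nseq (g B0) B0 ++ nseq (g B1) B1 ++ nseq (g B2) B2.

Lemma cm_canon g y : cm y (canon g) = g y.
Proof. rewrite /canon !cm_cat /cm !count_nseq; caseK y => /=; lia. Qed.

Lemma eqK (x : K) : x.1 = 0%R -> x.2 = false -> x = idK.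
Proof. by case: x => /= ? ? -> ->. Qed.

Lemma kprod_nseq_refl (x : K) n : x.2 -> kprod (nseq n x) = if odd n then x else idK.
Proof.
move=> hx; elim: n => [|n IH] //=; rewrite IH; case: (odd n) => /=.
  by apply: eqK; rewrite /= hx ?addbb // subrr.
by rewrite /mulK /= oppr0 if_same addr0 addbF; case: (x).
Qed.

Lemma kprod_nseq_id n : kprod (nseq n idK) = idK.
Proof. by elim: n => [|n IH] //=; rewrite IH mul1K. Qed.

Lemma perm_cm L L' : (forall y, cm y L = cm y L') -> perm_eq L L'.
Proof. move=> h; rewrite /perm_eq; apply/allP => y _; apply/eqP; exact: h. Qed.

Lemma build L P : kprod P = idK -> (forall y, cm y P <= cm y L)%N ->
  cm A1 L = cm A1 P -> cm A2 L = cm A2 P ->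
  ~~ odd (cm B0 L - cm B0 P) -> ~~ odd (cm B1 L - cm B1 P) -> ~~ odd (cm B2 L - cm B2 P) ->
  exists L', perm_eq L L' /\ kprod L' = idK.
Proof.
move=> hP hc h1 h2 h3 h4 h5.
set g := fun y => (cm y L - cm y P)%N.
exists (P ++ canon g); split.
  by apply: perm_cm => y; rewrite cm_cat cm_canon /g; have := hc y; lia.
rewrite kprod_cat hP mul1K /canon !kprod_cat kprod_nseq_id.
rewrite /g h1 h2 !subnn /= !kprod_nseq_refl //.
rewrite (negbTE h3) (negbTE h4) (negbTE h5) !mul1K.
by apply: eqK.
Qed.

Lemma z3lemma (p q u : 'Z_3) : p != 0%R -> q != 0%R ->
  [|| (p + q + u == 0)%R, (p - q + u == 0)%R, (u - p - q == 0)%R | (q - p + u == 0)%R].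
Proof.
by case: p => [[|[|[|]]] ?] //; case: q => [[|[|[|]]] ?] //; case: u => [[|[|[|]]] ?].
Qed.

Lemma build2 L (p q f : K) : p.2 = false -> q.2 = false -> f.2 = true -> p.1 != 0%R -> q.1 != 0%R ->
  (forall y, cm y [:: p; q; f] <= cm y L)%N -> ~~ odd (count (fun x : K => x.2) L) ->
  exists L', perm_eq L L' /\ kprod L' = idK.
Proof.
move=> hp hq hf p0 q0 hc hpar.
set g := fun y => (cm y L - cm y [:: p; q; f])%N.
set M := canon g.
have hperm : forall L', (forall y, cm y L' = cm y [:: p; q; f] + cm y M)%N -> perm_eq L L'.
  move=> L' h; apply: perm_cm => y; rewrite h cm_canon /g; have := hc y; lia.
have hpar' : forall L', perm_eq L L' -> (kprod L').2 = false.
  move=> L' /seq.permP h; rewrite kprod_par -h; exact: negbTE.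
set u := (f.1 - (kprod M).1)%R.
case/or4P: (z3lemma _ _ u p0 q0) => /eqP hz.
- have hl : perm_eq L [:: p, q, f & M] by apply: hperm => y; rewrite !cm_cons cm_nil; lia.
  exists [:: p, q, f & M]; split => //; apply: eqK; last exact: hpar'.
  rewrite /= hp hq hf -hz /u; ring.
- have hl : perm_eq L [:: p, f, q & M] by apply: hperm => y; rewrite !cm_cons cm_nil; lia.
  exists [:: p, f, q & M]; split => //; apply: eqK; last exact: hpar'.
  rewrite /= hp hq hf -hz /u; ring.
- have hl : perm_eq L [:: f, p, q & M] by apply: hperm => y; rewrite !cm_cons cm_nil; lia.
  exists [:: f, p, q & M]; split => //; apply: eqK; last exact: hpar'.
  rewrite /= hp hq hf -hz /u; ring.
- have hl : perm_eq L [:: q, f, p & M] by apply: hperm => y; rewrite !cm_cons cm_nil; lia.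
  exists [:: q, f, p & M]; split => //; apply: eqK; last exact: hpar'.
  rewrite /= hp hq hf -hz /u; ring.
Qed.

Ltac tryP P := apply: (build _ P); [by apply/eqP
  | let y := fresh "y" in intro y; caseK y; rewrite ?cm_cons ?cm_nil /=; lia
  | rewrite ?cm_cons ?cm_nil /= ?oddE; lia ..].

Ltac try2 p q f := apply: (build2 _ p q f) => //; let y := fresh "y" in intro y; caseK y; rewrite ?cm_cons ?cm_nil /=; lia.

Lemma ifpart L : FL L -> exists L', perm_eq L L' /\ kprod L' = idK.
Proof.
rewrite /FL /Fc.
have hrc : count (fun x : K => x.2) L = (cm B0 L + cm B1 L + cm B2 L)%N by rewrite count6 /=; lia.
case: ifP => hr.
  move=> h3; exists L; split => //.
  have : ~~ has (fun x : K => x.2) L by rewrite has_count hrc; lia.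
  rewrite -all_predC => /kprod_norefl hv.
  apply: eqK; first by apply/eqP; rewrite hv natZ3.
  by rewrite kprod_par hrc (eqP hr).
case: ifP => // ho.
have hpar : ~~ odd (count (fun x : K => x.2) L) by rewrite hrc ho.
case: ifP => hm.
  move=> _.
  case: (leqP 2 (cm A1 L)) => h1; [| case: (leqP 2 (cm A2 L)) => h2];
  (case: (posnP (cm B0 L)) => h3; [case: (posnP (cm B1 L)) => h4|]);
  first [ try2 A1 A1 B0 | try2 A1 A1 B1 | try2 A1 A1 B2
        | try2 A2 A2 B0 | try2 A2 A2 B1 | try2 A2 A2 B2
        | try2 A1 A2 B0 | try2 A1 A2 B1 | try2 A1 A2 B2 ].
rewrite oddE in ho.
case O0: (odd (cm B0 L)); case O1: (odd (cm B1 L)); case O2: (odd (cm B2 L));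
  rewrite ?oddE in O0 O1 O2; try (exfalso; lia);
  case: ifP => hm1 hF; clear hpar hrc;
  case: (posnP (cm B0 L)) => ?; case: (posnP (cm B1 L)) => ?; case: (posnP (cm B2 L)) => ?;
  try (exfalso; lia);
  lazymatch goal with
  | hm1 : is_true (_ == 1%N) |- _ =>
    case: (posnP (cm A1 L)) => hA;
    let r := lazymatch type of hA with cm A1 L = 0%N => constr:(A2) | _ => constr:(A1) end in
    lazymatch goal with
    | _ : (cm B0 L %% 2 == 1) = true, _ : (cm B1 L %% 2 == 1) = true |- _ =>
        first [tryP [:: r; B0; B1] | tryP [:: B0; r; B1]]
    | _ : (cm B0 L %% 2 == 1) = true, _ : (cm B2 L %% 2 == 1) = true |- _ =>
        first [tryP [:: r; B0; B2] | tryP [:: B0; r; B2]]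
    | _ : (cm B1 L %% 2 == 1) = true, _ : (cm B2 L %% 2 == 1) = true |- _ =>
        first [tryP [:: r; B1; B2] | tryP [:: B1; r; B2]]
    | _ : is_true (0 < cm B0 L), _ : is_true (0 < cm B1 L) |- _ =>
        first [tryP [:: r; B0; B1; B0; B1] | tryP [:: B0; r; B1; B0; B1]]
    | _ : is_true (0 < cm B0 L), _ : is_true (0 < cm B2 L) |- _ =>
        first [tryP [:: r; B0; B2; B0; B2] | tryP [:: B0; r; B2; B0; B2]]
    | _ : is_true (0 < cm B1 L), _ : is_true (0 < cm B2 L) |- _ =>
        first [tryP [:: r; B1; B2; B1; B2] | tryP [:: B1; r; B2; B1; B2]]
    end
  | _ =>
    lazymatch goal with
    | _ : (cm B0 L %% 2 == 1) = true, _ : (cm B1 L %% 2 == 1) = true, _ : is_true (0 < cm B2 L) |- _ =>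
        tryP [:: B0; B2; B1; B2]
    | _ : (cm B0 L %% 2 == 1) = true, _ : (cm B1 L %% 2 == 1) = true |- _ =>
        tryP [:: B0; B1; B0; B1; B0; B1]
    | _ : (cm B0 L %% 2 == 1) = true, _ : (cm B2 L %% 2 == 1) = true, _ : is_true (0 < cm B1 L) |- _ =>
        tryP [:: B0; B1; B2; B1]
    | _ : (cm B0 L %% 2 == 1) = true, _ : (cm B2 L %% 2 == 1) = true |- _ =>
        tryP [:: B0; B2; B0; B2; B0; B2]
    | _ : (cm B1 L %% 2 == 1) = true, _ : (cm B2 L %% 2 == 1) = true, _ : is_true (0 < cm B0 L) |- _ =>
        tryP [:: B1; B0; B2; B0]
    | _ : (cm B1 L %% 2 == 1) = true, _ : (cm B2 L %% 2 == 1) = true |- _ =>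
        tryP [:: B1; B2; B1; B2; B1; B2]
    | _ => tryP (@nil K)
    end
  end.
Qed.

Theorem Char L : (exists L', perm_eq L L' /\ kprod L' = idK) <-> FL L.
Proof.
split; last exact: ifpart.
case=> L' [hp /onlyif]; rewrite /FL /cm.
by rewrite !(seq.permP hp).
Qed.

Definition enc (gT : finGroupType) (a b : gT) (x : K) : gT := (a ^+ (val x.1) * b ^+ x.2)%g.
Arguments enc {gT}.

Lemma bak {gT : finGroupType} {a b : gT} : (b * a = a ^+ 2 * b)%g ->
  forall k, (b * a ^+ k = a ^+ (2 * k)%N * b)%g.
Proof.
move=> hba; elim=> [|k IH]; first by rewrite expg0 mulg1 mul1g.
by rewrite expgSr mulgA IH -mulgA hba mulgA -expgD mulnS addn2.
Qed.

Lemma encM_gen {gT : finGroupType} {a b : gT} : (a ^+ 3 = 1)%g -> (b ^+ 2 = 1)%g ->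
  (b * a = a ^+ 2 * b)%g -> forall i j (s t : bool),
  (a ^+ i * b ^+ s * (a ^+ j * b ^+ t) = a ^+ ((i + (if s then 2 * j else j)) %% 3)%N * b ^+ ((s + t) %% 2)%N)%g.
Proof.
move=> ha hb hba i j s t.
rewrite (expg_mod _ ha) (expg_mod _ hb).
case: s.
  rewrite (_ : b ^+ true = b)%g ?expg1 // (_ : (true + t)%N = 1 + t)%N // (expgD b) expg1 expgD.
  rewrite !mulgA; congr (_ * _)%g.
  by rewrite -mulgA bak // mulgA.
by rewrite (_ : (false + t)%N = t) // (_ : b ^+ false = 1)%g ?expg0 // mulg1 expgD mulgA.
Qed.

Lemma enc_mul {gT : finGroupType} {a b : gT} : (a ^+ 3 = 1)%g -> (b ^+ 2 = 1)%g ->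
  (b * a = a ^+ 2 * b)%g -> forall x y, (enc a b x * enc a b y = enc a b (mulK x y))%g.
Proof.
move=> ha hb hba x y; rewrite /enc encM_gen //.
by caseK x; caseK y.
Qed.

Lemma enc_id (gT : finGroupType) (a b : gT) : enc a b idK = 1%g.
Proof. by rewrite /enc /= expg0 mulg1. Qed.

Lemma enc_prod {gT : finGroupType} {a b : gT} : (a ^+ 3 = 1)%g -> (b ^+ 2 = 1)%g ->
  (b * a = a ^+ 2 * b)%g -> forall L, (\prod_(x <- map (enc a b) L) x)%g = enc a b (kprod L).
Proof.
move=> ha hb hba; elim=> [|x L IH]; first by rewrite big_nil enc_id.
by rewrite /= big_cons IH enc_mul.
Qed.

Lemma enc_surj {gT : finGroupType} {a b : gT} : (a ^+ 3 = 1)%g -> (b ^+ 2 = 1)%g ->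
  (b * a = a ^+ 2 * b)%g -> <<[set a; b]>>%g = [set: gT] -> forall g, exists x, enc a b x = g.
Proof.
move=> ha hb hba hgen g.
set A := [set enc a b x | x : K].
have gA : group_set A.
  apply/group_setP; split; first by apply/imsetP; exists idK => //; rewrite enc_id.
  move=> _ _ /imsetP [x _ ->] /imsetP [y _ ->]; rewrite enc_mul //; exact: imset_f.
have sub : ([set a; b] \subset A)%g.
  apply/subsetP => z; rewrite !inE => /orP [] /eqP ->; apply/imsetP.
    by exists A1 => //; rewrite /enc /= expg1 expg0 mulg1.
  by exists B0 => //; rewrite /enc /= expg1 expg0 mul1g.
have : g \in A.
  have : (<<[set a; b]>> \subset (Group gA))%g by rewrite gen_subG.
  by rewrite hgen => /subsetP; apply; rewrite inE.
by case/imsetP => x _ ->; exists x.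
Qed.

Lemma cardK : #|{: K}| = 6.
Proof. by rewrite card_prod card_ord card_bool. Qed.

Lemma enc_inj {gT : finGroupType} {a b : gT} : #|[set: gT]| = 6 -> (a ^+ 3 = 1)%g -> (b ^+ 2 = 1)%g ->
  (b * a = a ^+ 2 * b)%g -> <<[set a; b]>>%g = [set: gT] -> injective (enc a b).
Proof.
move=> hc ha hb hba hgen.
have e : (enc a b) @: [set: K] = [set: gT].
  apply/setP => g; rewrite inE; have [x <-] := enc_surj ha hb hba hgen g; exact: imset_f.
have : #|(enc a b) @: [set: K]| == #|[set: K]| by rewrite e hc cardsT cardK.
move/imset_injP => h x y; by apply: h; rewrite inE.
Qed.

Definition dec (gT : finGroupType) (a b : gT) (g : gT) : K := odflt idK [pick x | enc a b x == g].
Arguments dec {gT}.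

Lemma enc_dec {gT : finGroupType} {a b : gT} : (a ^+ 3 = 1)%g -> (b ^+ 2 = 1)%g ->
  (b * a = a ^+ 2 * b)%g -> <<[set a; b]>>%g = [set: gT] -> forall g, enc a b (dec a b g) = g.
Proof.
move=> ha hb hba hgen g; rewrite /dec; case: pickP => [x /eqP //|h].
have [x hx] := enc_surj ha hb hba hgen g.
by have := h x; rewrite hx eqxx.
Qed.

Lemma dec_enc {gT : finGroupType} {a b : gT} : #|[set: gT]| = 6 -> (a ^+ 3 = 1)%g -> (b ^+ 2 = 1)%g ->
  (b * a = a ^+ 2 * b)%g -> <<[set a; b]>>%g = [set: gT] -> forall x, dec a b (enc a b x) = x.
Proof.
move=> hc ha hb hba hgen x; apply: (enc_inj hc ha hb hba hgen); exact: enc_dec.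
Qed.

Lemma inB_K {gT : finGroupType} {a b : gT} : #|[set: gT]| = 6 -> (a ^+ 3 = 1)%g -> (b ^+ 2 = 1)%g ->
  (b * a = a ^+ 2 * b)%g -> <<[set a; b]>>%g = [set: gT] -> forall S : seq gT,
  inB S <-> FL (map (dec a b) S).
Proof.
move=> hc ha hb hba hgen S; rewrite -Char; split.
  case=> S' [hp hprod]; exists (map (dec a b) S'); split; first exact: perm_map.
  apply: (enc_inj hc ha hb hba hgen); rewrite -enc_prod // -map_comp enc_id -[RHS]hprod.
  have -> // : map (enc a b \o dec a b) S' = S'.
  by rewrite -[RHS]map_id; apply: eq_map => g /=; rewrite enc_dec.
case=> L' [hp hc']; exists (map (enc a b) L'); split.
  rewrite -[X in perm_eq X _](@map_id _ S) -(eq_map (enc_dec ha hb hba hgen)) map_comp.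
  exact: perm_map.
by rewrite enc_prod // hc' enc_id.
Qed.

Definition N3 x := if x < 2 then x else 2 + (x - 2) %% 3.
Definition N2 x := if x < 2 then x else 2 + (x - 2) %% 2.

Lemma FcN n1 n2 f0 f1 f2 : Fc n1 n2 f0 f1 f2 = Fc (N3 n1) (N3 n2) (N2 f0) (N2 f1) (N2 f2).
Proof.
have e1 x : ((N2 x == 0) = (x == 0)) * ((N2 x == 1) = (x == 1)) * ((0 < N2 x) = (0 < x)) * (odd (N2 x) = odd x).
  rewrite /N2 !oddE; case: ifP => h; split; try split; try split; lia.
have e2 x : ((N3 x == 0) = (x == 0)) * ((N3 x == 1) = (x == 1)) * ((2 <= N3 x) = (2 <= x)) * (N3 x %% 3 = x %% 3).
  rewrite /N3; case: ifP => h; split; try split; try split; lia.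
rewrite /Fc.
have -> : (N2 f0 + N2 f1 + N2 f2 == 0) = (f0 + f1 + f2 == 0) by rewrite !addn_eq0 !e1.
have -> : odd (N2 f0 + N2 f1 + N2 f2) = odd (f0 + f1 + f2) by rewrite !oddD !e1.
have -> : (N3 n1 + 2 * N3 n2) %% 3 = (n1 + 2 * n2) %% 3 by rewrite -modnDm -modnMm (e2 n2).2 modnMm modnDm -modnDml (e2 n1).2 modnDml.
have -> : (2 <= N3 n1 + N3 n2) = (2 <= n1 + n2).
  have := e2 n1; have := e2 n2; move=> [[[h1 h2] h3] _] [[[h4 h5] h6] _]; lia.
have -> : (N3 n1 + N3 n2 == 1) = (n1 + n2 == 1).
  have := e2 n1; have := e2 n2; move=> [[[h1 h2] h3] _] [[[h4 h5] h6] _]; lia.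
by rewrite !e1.
Qed.
Lemma N3P x : (x < 2 /\ N3 x = x) \/ (2 <= x /\ N3 x = 2 + (x-2) %% 3).
Proof. rewrite /N3; case: ifP => h; [left|right]; lia. Qed.
Lemma N2P x : (x < 2 /\ N2 x = x) \/ (2 <= x /\ N2 x = 2 + (x-2) %% 2).
Proof. rewrite /N2; case: ifP => h; [left|right]; lia. Qed.
Lemma N3D x y : N3 (x + y) = N3 (N3 x + N3 y).
Proof. have := N3P x; have := N3P y; have := N3P (x+y); have := N3P (N3 x + N3 y); lia. Qed.
Lemma N2D x y : N2 (x + y) = N2 (N2 x + N2 y).
Proof. have := N2P x; have := N2P y; have := N2P (x+y); have := N2P (N2 x + N2 y); lia. Qed.

Definition c5 := (nat * nat * nat * nat * nat)%type.
Definition F5 (u : c5) : bool := let: (n1,n2,f0,f1,f2) := u in Fc n1 n2 f0 f1 f2.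
Definition add5 (u v : c5) : c5 := let: (a1,a2,a3,a4,a5) := u in let: (b1,b2,b3,b4,b5) := v in
  (a1+b1, a2+b2, a3+b3, a4+b4, a5+b5).
Definition N5 (u : c5) : c5 := let: (a1,a2,a3,a4,a5) := u in (N3 a1, N3 a2, N2 a3, N2 a4, N2 a5).

Lemma F5N u v : F5 (add5 u v) = F5 (add5 (N5 u) (N5 v)).
Proof.
case: u => [[[[u1 u2] u3] u4] u5]; case: v => [[[[v1 v2] v3] v4] v5] /=.
by rewrite FcN [RHS]FcN -!N3D -!N2D.
Qed.

Definition r3 := iota 0 5.
Definition r2 := iota 0 4.
Definition NF : seq c5 := [seq (x, e) | x <- [seq (x, d) | x <- [seq (x, c) | x <- [seq (a, b) | a <- r3, b <- r3], c <- r2], d <- r2], e <- r2].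

Lemma N5_NF u : N5 u \in NF.
Proof.
case: u => [[[[u1 u2] u3] u4] u5] /=.
have h3 x : N3 x \in r3 by rewrite mem_iota; have := N3P x; lia.
have h2 x : N2 x \in r2 by rewrite mem_iota; have := N2P x; lia.
by do 4 (apply: allpairs_f => //).
Qed.

Definition sameT (u v : c5) := all (fun t => F5 (add5 u t) == F5 (add5 v t)) NF.

Definition reps : seq c5 := [:: (0,0,0,0,0); (0,0,0,0,1); (0,0,0,0,2); (0,0,0,0,3); (0,0,0,1,0); (0,0,0,1,1); (0,1,0,0,1); (0,1,0,0,2); (0,0,0,2,0); (0,1,0,1,0); (0,1,0,1,1); (0,0,1,1,1); (0,0,0,3,0); (0,1,0,2,0); (0,0,1,0,0); (0,0,1,0,1); (0,0,1,1,0); (0,0,2,0,0); (0,1,1,0,0); (0,0,3,0,0); (0,1,2,0,0); (0,1,0,0,0); (0,2,0,0,0); (1,1,0,0,0); (2,0,0,0,0); (1,0,0,0,0)].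

Lemma reps_norm : all (fun r => N5 r == r) reps.
Proof. by vm_compute. Qed.

Lemma distinct_check : all (fun i => all (fun j => (i == j) ||
  ~~ sameT (nth (0,0,0,0,0) reps i) (nth (0,0,0,0,0) reps j)) (iota 0 26)) (iota 0 26).
Proof. by vm_compute. Qed.


Definition gens : seq c5 := [:: (1,0,0,0,0); (0,1,0,0,0); (0,0,1,0,0); (0,0,0,1,0); (0,0,0,0,1)].
Lemma closure_check : all (fun r => all (fun e => has (sameT (add5 r e)) reps) gens) reps.
Proof. by vm_compute. Qed.

Definition cn {gT : finGroupType} (a b : gT) (S : seq gT) : c5 :=
  let L := map (dec a b) S in (cm A1 L, cm A2 L, cm B0 L, cm B1 L, cm B2 L).

Lemma cn_cat {gT : finGroupType} (a b : gT) S T : cn a b (S ++ T) = add5 (cn a b S) (cn a b T).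
Proof. by rewrite /cn map_cat !cm_cat. Qed.

Lemma inB_F {gT : finGroupType} {a b : gT} : #|[set: gT]| = 6 -> (a ^+ 3 = 1)%g -> (b ^+ 2 = 1)%g ->
  (b * a = a ^+ 2 * b)%g -> <<[set a; b]>>%g = [set: gT] -> forall S : seq gT,
  inB S <-> F5 (cn a b S).
Proof. move=> hc ha hb hba hgen S; exact: (inB_K hc ha hb hba hgen S). Qed.

Lemma cm_nseq y n x : cm y (nseq n x) = ((x == y) * n)%N.
Proof. by rewrite /cm count_nseq. Qed.

Definition real {gT : finGroupType} (a b : gT) (u : c5) : seq gT :=
  map (enc a b) (let: (n1,n2,f0,f1,f2) := u in
    nseq n1 A1 ++ nseq n2 A2 ++ nseq f0 B0 ++ nseq f1 B1 ++ nseq f2 B2).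

Lemma cn_real {gT : finGroupType} {a b : gT} : #|[set: gT]| = 6 -> (a ^+ 3 = 1)%g -> (b ^+ 2 = 1)%g ->
  (b * a = a ^+ 2 * b)%g -> <<[set a; b]>>%g = [set: gT] -> forall u, cn a b (real a b u) = u.
Proof.
move=> hc ha hb hba hgen [[[[n1 n2] f0] f1] f2].
rewrite /cn /real -map_comp.
set l := (X in map _ X).
have -> : map (dec a b \o enc a b) l = l.
  by rewrite -[RHS]map_id; apply: eq_map => x /=; rewrite (dec_enc hc ha hb hba hgen).
rewrite /l !cm_cat !cm_nseq /=.
congr (_,_,_,_,_); lia.
Qed.

Lemma N3N3 x : N3 (N3 x) = N3 x.
Proof. have := N3P x; have := N3P (N3 x); lia. Qed.
Lemma N2N2 x : N2 (N2 x) = N2 x.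
Proof. have := N2P x; have := N2P (N2 x); lia. Qed.
Lemma N5N5 u : N5 (N5 u) = N5 u.
Proof. by case: u => [[[[u1 u2] u3] u4] u5] /=; rewrite !N3N3 !N2N2. Qed.

Lemma EF u v : F5 (add5 u v) = F5 (add5 u (N5 v)).
Proof. by rewrite F5N [RHS]F5N N5N5. Qed.

Lemma add5A u v w : add5 (add5 u v) w = add5 u (add5 v w).
Proof.
case: u => [[[[? ?] ?] ?] ?]; case: v => [[[[? ?] ?] ?] ?]; case: w => [[[[? ?] ?] ?] ?] /=.
by rewrite !addnA.
Qed.
Lemma add5C u v : add5 u v = add5 v u.
Proof.
case: u => [[[[? ?] ?] ?] ?]; case: v => [[[[? ?] ?] ?] ?] /=.
by congr (_,_,_,_,_); rewrite addnC.
Qed.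
Lemma add50 u : add5 (0,0,0,0,0) u = u.
Proof. by case: u => [[[[? ?] ?] ?] ?]. Qed.

Definition Eq5 (u r : c5) := forall t, t \in NF -> F5 (add5 u t) = F5 (add5 r t).

Lemma sameTP {u r} : sameT u r -> Eq5 u r.
Proof. move=> /allP h t /h /eqP; exact. Qed.

Lemma step u r e : Eq5 u r -> r \in reps -> (e = (0,0,0,0,0) \/ e \in gens) ->
  exists2 r', r' \in reps & Eq5 (add5 e u) r'.
Proof.
move=> hE hr [->|he]; first by exists r => //; rewrite add50.
have := allP closure_check r hr => /allP /(_ e he) /hasP [r' hr' hs].
exists r' => // t ht.
rewrite -(sameTP hs _ ht).
have -> : add5 (add5 e u) t = add5 u (add5 e t) by rewrite (add5C e u) add5A.
rewrite EF hE ?N5_NF // -EF.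
by rewrite add5A.
Qed.

Lemma cover_all {gT : finGroupType} {a b : gT} (S : seq gT) :
  exists2 r, r \in reps & Eq5 (cn a b S) r.
Proof.
elim: S => [|x S [r hr hE]]; first by exists (0,0,0,0,0).
rewrite -cat1s cn_cat; apply: (step _ _ _ hE hr).
rewrite /cn /=; set k := dec a b x; caseK k; rewrite !cm_cons !cm_nil /=;
  by [left | right].
Qed.

Lemma se_refl (gT : finGroupType) (S : seq gT) : seq_equiv S S.
Proof. by []. Qed.
Lemma se_sym {gT : finGroupType} {S S' : seq gT} : seq_equiv S S' -> seq_equiv S' S.
Proof. by move=> h T; split => /(h T). Qed.
Lemma se_trans {gT : finGroupType} {S1 S2 S3 : seq gT} :
  seq_equiv S1 S2 -> seq_equiv S2 S3 -> seq_equiv S1 S3.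
Proof. by move=> h1 h2 T; split => [/(h1 T)/(h2 T)|/(h2 T)/(h1 T)]. Qed.
Lemma se_catr {gT : finGroupType} {S S' : seq gT} (U : seq gT) :
  seq_equiv S S' -> seq_equiv (S ++ U) (S' ++ U).
Proof. by move=> h T; rewrite -!catA; exact: h. Qed.
Lemma inB_perm {gT : finGroupType} {L L' : seq gT} : perm_eq L L' -> inB L -> inB L'.
Proof.
move=> hp [S' [hp' h]]; exists S'; split => //.
by rewrite perm_sym in hp; exact: perm_trans hp hp'.
Qed.
Lemma se_perm {gT : finGroupType} {S S' : seq gT} : perm_eq S S' -> seq_equiv S S'.
Proof.
move=> hp T; split; apply: inB_perm; rewrite perm_cat2r //; by rewrite perm_sym.
Qed.
Lemma pcC {T : eqType} (U S : seq T) : perm_eq (U ++ S) (S ++ U).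
Proof. by rewrite perm_catC. Qed.

Lemma se_catl {gT : finGroupType} (U : seq gT) {S S' : seq gT} :
  seq_equiv S S' -> seq_equiv (U ++ S) (U ++ S').
Proof.
move=> h; apply: se_trans (se_perm (pcC U S)) _.
apply: se_trans (se_catr U h) _; exact: se_perm (pcC S' U).
Qed.


Lemma se_cn {gT : finGroupType} {a b : gT} : #|[set: gT]| = 6 -> (a ^+ 3 = 1)%g -> (b ^+ 2 = 1)%g ->
  (b * a = a ^+ 2 * b)%g -> <<[set a; b]>>%g = [set: gT] -> forall S S' : seq gT,
  N5 (cn a b S) = N5 (cn a b S') -> seq_equiv S S'.
Proof.
move=> hc ha hb hba hgen S S' h T.
by rewrite !(inB_F hc ha hb hba hgen) !cn_cat (F5N (cn a b S)) (F5N (cn a b S')) h.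
Qed.

Lemma cover_seq {gT : finGroupType} {a b : gT} : #|[set: gT]| = 6 -> (a ^+ 3 = 1)%g -> (b ^+ 2 = 1)%g ->
  (b * a = a ^+ 2 * b)%g -> <<[set a; b]>>%g = [set: gT] -> forall S : seq gT,
  exists2 R, R \in map (real a b) reps & seq_equiv S R.
Proof.
move=> hc ha hb hba hgen S.
have [r hr hE] := cover_all (a:=a) (b:=b) S.
exists (real a b r); first exact: map_f.
move=> T; rewrite !(inB_F hc ha hb hba hgen) !cn_cat (cn_real hc ha hb hba hgen).
by rewrite EF hE ?N5_NF // -EF.
Qed.

Lemma card26 {gT : finGroupType} {a b : gT} : #|[set: gT]| = 6 -> (a ^+ 3 = 1)%g -> (b ^+ 2 = 1)%g ->
  (b * a = a ^+ 2 * b)%g -> <<[set a; b]>>%g = [set: gT] -> class_semigroup_card gT 26.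
Proof.
move=> hc ha hb hba hgen.
exists (map (real a b) reps); split; first by rewrite size_map.
split; last exact: (cover_seq hc ha hb hba hgen).
move=> i j hi hj heq.
have hs : size reps = 26 by [].
rewrite !(nth_map (0,0,0,0,0)) ?hs // in heq.
have mi : i \in iota 0 26 by rewrite mem_iota; lia.
have mj : j \in iota 0 26 by rewrite mem_iota; lia.
have := allP distinct_check i mi => /allP /(_ j mj) /orP [/eqP //|].
move=> /allPn [t ht hne]; exfalso.
have := heq (real a b t); rewrite !(inB_F hc ha hb hba hgen) !cn_cat !(cn_real hc ha hb hba hgen).
case=> h1 h2.
suff e : F5 (add5 (nth (0,0,0,0,0) reps i) t) = F5 (add5 (nth (0,0,0,0,0) reps j) t).
  by rewrite e eqxx in hne.
by apply/idP/idP => [/h1|/h2].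
Qed.

Lemma decb {gT : finGroupType} {a b : gT} : #|[set: gT]| = 6 -> (a ^+ 3 = 1)%g -> (b ^+ 2 = 1)%g ->
  (b * a = a ^+ 2 * b)%g -> <<[set a; b]>>%g = [set: gT] -> dec a b b = B0.
Proof.
move=> hc ha hb hba hgen.
have e : enc a b B0 = b by rewrite /enc /= expg0 mul1g expg1.
by have := dec_enc hc ha hb hba hgen B0; rewrite e.
Qed.

Lemma no_sub {gT : finGroupType} {a b : gT} : #|[set: gT]| = 6 -> (a ^+ 3 = 1)%g -> (b ^+ 2 = 1)%g ->
  (b * a = a ^+ 2 * b)%g -> <<[set a; b]>>%g = [set: gT] -> ~ in_some_subgroup [:: b].
Proof.
move=> hc ha hb hba hgen [H [[hsat [hcl [E [hE [hid hinv]]]]] hb1]].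
set b1 := [:: b] in hb1 *.
have hb2 : H (b1 ++ b1) := hcl _ _ hb1 hb1.
have [T2 [hT2 hi2]] := hinv _ hb2.
have cnb : forall n, cn a b (nseq n b) = (0,0,n,0,0)%N.
  move=> n; rewrite /cn map_nseq (decb hc ha hb hba hgen) !cm_nseq /=.
  congr (_,_,_,_,_); lia.
have h42 : seq_equiv ((b1 ++ b1) ++ (b1 ++ b1)) (b1 ++ b1).
  apply: (se_cn hc ha hb hba hgen).
  by rewrite (_ : (b1 ++ b1) ++ (b1 ++ b1) = nseq 4 b) // (_ : b1 ++ b1 = nseq 2 b) // !cnb.
have hEb2 : seq_equiv E (b1 ++ b1).
  apply: se_trans (se_sym hi2) _.
  apply: se_trans (se_catr T2 (se_sym h42)) _.
  rewrite -catA.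
  apply: se_trans (se_catl (b1 ++ b1) hi2) _.
  apply: se_trans (se_perm (pcC _ _)) _.
  exact: hid _ hb2.
have h13 : seq_equiv b1 ((b1 ++ b1) ++ b1).
  apply: se_trans (se_sym (hid _ hb1)) _; exact: se_catr b1 hEb2.
have := h13 (real a b (0,0,0,3,0)%N).
rewrite !(inB_F hc ha hb hba hgen) !cn_cat !(cn_real hc ha hb hba hgen).
rewrite (_ : b1 = nseq 1 b) // !cnb.
by case=> _ h; have := h isT.
Qed.

Theorem mainTheorem11 (gT : finGroupType) (a b : gT)
  (hcard : #|[set: gT]| = 6)
  (hgen : <<[set a; b]>>%g = [set: gT])
  (ha : (a ^+ 3 = 1)%g) (hb : (b ^+ 2 = 1)%g)
  (hba : (b * a = a ^+ 2 * b)%g) :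
  class_semigroup_card gT 26 /\
  ~ class_semigroup_clifford gT /\
  ~ in_some_subgroup [:: b].
Proof.
have ns := no_sub hcard ha hb hba hgen.
split; first exact: (card26 hcard ha hb hba hgen).
split => // hc; exact: ns (hc [:: b]).
Qed.
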